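(* Let $q=2$ and let $d,e$ be integers with $d\ge1$ and $e\ge d+1$. For all $0\le i\le d-1$ and $1\le j\le d$, $$|B_j(i)|>|B_j(i+1)|.$$
   Context: With $q=2$: for integers $m\ge 0$ and $l$, ${m\brack l}=\prod_{t=1}^{l}\frac{q^{m-t+1}-1}{q^t-1}$ for $l\ge0$ and $0$ for $l<0$. For $0\le i,j\le d$, $$B_j(i)=\sum_{h=0}^{\min\{j,d-i\}}(-1)^{j-h}q^{eh+\binom{j-h}{2}}{d-h\brack d-j}{d-i\brack h};$$ these are the eigenvalues of the bilinear forms graph $H_q(d,e,j)$ (vertices: $d\times e$ matrices over $\mathbb F_q$, adjacent iff their difference has rank $j$). *)

(* Defs.v *)
From mathcomp Require Import all_boot all_order all_algebra.
Set Implicit Arguments. Unset Strict Implicit. Unset Printing Implicit Defensive.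
Import Order.TTheory GRing.Theory Num.Theory.
Local Open Scope ring_scope.

Definition q : nat := 2.

(* Exponents m-t+1 are taken in int
   so that no truncation occurs (q^(negative) as rat power). *)
Definition gbin (m l : nat) : rat :=
  \prod_(1 <= t < l.+1)
     (((q%:R : rat) ^ ((m%:Z - t%:Z + 1)%R) - 1) / ((q%:R : rat) ^+ t - 1)).

Definition gbinz (m : nat) (l : int) : rat :=
  match l with Posz n => gbin m n | Negz _ => 0 end.

Definition B (d e j i : nat) : rat :=
  \sum_(0 <= h < (minn j (d - i)).+1)
     ((-1) ^+ (j - h)%N * (q%:R) ^+ (e * h + 'C(j - h, 2))%N
       * gbinz (d - h)%N ((d%:Z - j%:Z)%R) * gbin (d - i)%N h).

(* Main.v *)
Require Import Defs.
From mathcomp Require Import all_boot all_order all_algebra.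
From mathcomp Require Import ring lra zify.
Import Order.TTheory GRing.Theory Num.Theory.
Local Open Scope ring_scope.

Notation Q := (q%:R : rat).
Lemma QE : Q = 2. Proof. by []. Qed.
Lemma Qpos n : 0 < Q ^+ n. Proof. by rewrite exprn_gt0. Qed.
Lemma Qge1 n : 1 <= Q ^+ n. Proof. by rewrite exprn_ege1. Qed.
Lemma Qgt1 n : (0 < n)%N -> 1 < Q ^+ n. Proof. by move=> h; rewrite exprn_egt1 // -?lt0n. Qed.
Lemma Qm1 n : (0 < n)%N -> Q ^+ n - 1 != 0.
Proof. by move=> h; rewrite subr_eq0 gt_eqF // Qgt1. Qed.

Lemma gbin0 m : gbin m 0 = 1.
Proof. by rewrite /gbin big_geq. Qed.

Lemma gbin_raw m l : gbin m l.+1 =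
  gbin m l * ((Q ^ (m%:Z - (l.+1)%:Z + 1) - 1) / (Q ^+ l.+1 - 1)).
Proof. by rewrite /gbin big_nat_recr. Qed.

Lemma gbinS m l : (l <= m)%N -> gbin m l.+1 =
  gbin m l * ((Q ^+ (m - l) - 1) / (Q ^+ l.+1 - 1)).
Proof.
move=> h; rewrite gbin_raw.
have -> : (m%:Z - (l.+1)%:Z + 1 = (m - l)%N :> int) by lia.
by [].
Qed.

Lemma gbin_gt m l : (m < l)%N -> gbin m l = 0.
Proof.
elim: l => [//|l IH] h.
rewrite gbin_raw.
case: (ltngtP m l) => [lt|gt|eq]; first by rewrite IH // mul0r.
  lia.
subst l.
have -> : (m%:Z - (m.+1)%:Z + 1 = 0 :> int) by lia.
by rewrite expr0z subrr mul0r mulr0.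
Qed.

Lemma gbin_pos m l : (l <= m)%N -> 0 < gbin m l.
Proof.
elim: l => [|l IH] h; first by rewrite gbin0.
rewrite gbinS; last lia.
apply: mulr_gt0; first by apply: IH; lia.
apply: divr_gt0; rewrite subr_gt0 Qgt1 //; lia.
Qed.

Lemma gbinM m l : (l <= m.+1)%N ->
  gbin m.+1 l * (Q ^+ (m.+1 - l) - 1) = gbin m l * (Q ^+ m.+1 - 1).
Proof.
elim: l => [|l IH] h; first by rewrite !gbin0 subn0.
rewrite gbinS; last lia.
case: (ltngtP l m) => [lt|gt|eq]; last first.
  subst l. rewrite (@gbin_gt m m.+1) // subnn expr0 subrr. by rewrite !mulr0 mul0r.
  lia.
rewrite gbinS; last lia.
have E := IH (ltnW h).
have -> : (m.+1 - l.+1 = m - l)%N by lia.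
transitivity (gbin m.+1 l * (Q ^+ (m.+1 - l) - 1) * ((Q^+(m-l) - 1) / (Q^+l.+1 - 1))); first by ring.
rewrite E; ring.
Qed.

Lemma gbin_diag m : gbin m m = 1.
Proof.
elim: m => [|m IH]; first by rewrite gbin0.
rewrite gbinS // mulrA (@gbinM m m (leqnSn m)) IH mul1r.
by rewrite divff // Qm1.
Qed.

Lemma gbinP m l : gbin m.+1 l.+1 = gbin m l.+1 + Q ^+ (m - l) * gbin m l.
Proof.
case: (leqP l m) => h; last first.
  by rewrite !gbin_gt ?mulr0 ?addr0 //; lia.
rewrite gbinS; last lia.
rewrite mulrA (@gbinM m l ltac:(lia)).
rewrite gbinS //.
have -> : (Q ^+ m.+1 = Q ^+ (m - l) * Q ^+ l.+1) by rewrite -exprD; congr (_ ^+ _); lia.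
have := @Qm1 l.+1 (ltn0Sn l). move: (Q ^+ l.+1) => Y hY.
field. done.
Qed.

Definition T d e j i h : rat := (-1) ^+ (j - h) * Q ^+ (e * h + 'C(j - h, 2))
   * gbin (d - h) (d - j) * gbin (d - i) h.

Lemma Bfull d e j i : (j <= d)%N -> B d e j i = \sum_(0 <= h < d.+1) T d e j i h.
Proof.
move=> hj; rewrite /B subzn //.
rewrite [RHS](@big_cat_nat _ _ _ (minn j (d - i)).+1 0 d.+1) //=; last by lia.
rewrite [X in _ = _ + X]big_nat_cond [X in _ = _ + X]big1 ?addr0 //.
move=> h; rewrite andbT => /andP [h1 h2].
rewrite /T.
case: (leqP h j) => hh.
  rewrite (@gbin_gt (d - i) h) ?mulr0 //; lia.
rewrite (@gbin_gt (d - h) (d - j)) ?mulr0 ?mul0r //; lia.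
Qed.

Lemma Bbase d e j : (j <= d)%N -> B d e j d = (-1) ^+ j * Q ^+ 'C(j, 2) * gbin d (d - j).
Proof.
move=> hj; rewrite /B subzn // subnn minn0 big_nat1 /= !subn0 muln0 add0n gbin0 mulr1.
by [].
Qed.

Lemma Bj0 d e i : B d e 0 i = 1.
Proof.
rewrite /B min0n big_nat1 /= !subn0 muln0 gbin0 mulr1 /=.
have -> : (0 + 'C(0,2) = 0)%N by [].
by rewrite addn0 gbin_diag !expr0 !mul1r.
Qed.

Lemma Bdiff d e j i : (j <= d)%N -> (i <= d)%N ->
 B d.+1 e.+1 j.+1 i - B d.+1 e.+1 j.+1 i.+1 = Q ^+ (e.+1 + (d - i)) * B d e j i.
Proof.
move=> hj hi.
rewrite !Bfull // -sumrB big_nat_recl // /T !gbin0 subrr add0r big_distrr /=.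
apply: eq_big_nat => h /andP [_ hh].
rewrite !subSS (subSn hi) -mulrBr gbinP addrAC subrr add0r.
case: (leqP h (d - i)) => hdi; last by rewrite (@gbin_gt (d - i) h) // !mulr0.
transitivity ((-1) ^+ (j - h) * (Q ^+ (e.+1 * h.+1 + 'C(j - h, 2)) * Q ^+ (d - i - h)) *
   gbin (d - h) (d - j) * gbin (d - i) h); first by ring.
rewrite -exprD.
have -> : (e.+1 * h.+1 + 'C(j - h, 2) + (d - i - h) = e.+1 + (d - i) + (e * h + 'C(j - h, 2)))%N.
  rewrite !mulSn !mulnS. lia.
rewrite exprD. ring.
Qed.

Lemma abs_sign n (x : rat) : 0 < (-1) ^+ n * x -> `|x| = (-1) ^+ n * x.
Proof. by move=> h; rewrite -(normrMsign n x) gtr0_norm. Qed.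

Lemma sign_sq n (x : rat) : (-1) ^+ n * ((-1) ^+ n * x) = x.
Proof. by rewrite mulrA -expr2 sqrr_sign mul1r. Qed.

Lemma down_ind (P : nat -> Prop) lo hi :
  P hi -> (forall i, (lo <= i)%N -> (i < hi)%N -> P i.+1 -> P i) ->
  forall i, (lo <= i <= hi)%N -> P i.
Proof.
move=> Ph Hs i /andP [h1 h2].
have [n En] : exists n, hi = (i + n)%N by exists (hi - i)%N; lia.
elim: n i En h1 h2 => [|n IH] i En h1 h2; first by rewrite -(addn0 i) -En.
apply: Hs => //; first lia.
apply: IH; lia.
Qed.

Lemma base_ineq d e' j' : (d < e')%N -> (j' <= d)%N ->
  2 * (Q ^+ 'C(j'.+1, 2) * gbin d.+1 (d - j')) <
  Q ^+ e'.+1 * (Q ^+ 'C(j', 2) * gbin d (d - j')).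
Proof.
move=> he hj.
have HM := @gbinM d (d - j') ltac:(lia).
rewrite (_ : (d.+1 - (d - j') = j'.+1)%N) in HM; last lia.
have G0 := @gbin_pos d (d - j') ltac:(lia).
rewrite binS bin1 exprD.
set G1 := gbin d.+1 (d - j') in HM *.
set G0' := gbin d (d - j') in HM G0 *.
have Qc := Qpos 'C(j', 2).
set C := Q ^+ 'C(j', 2) in Qc *.
have HY : Q ^+ j'.+1 = 2 * Q ^+ j' by rewrite exprS.
have HZ : 2 * Q ^+ d.+1 <= Q ^+ e'.+1.
  have -> : (e'.+1 = (e' - d.+1) + d.+2)%N by lia.
  rewrite exprD (exprS _ d.+1).
  apply: ler_peMl; first by rewrite mulr_ge0 // ltW // Qpos.
  exact: Qge1.
have HX := Qpos d.+1.
have HQ := Qpos j'.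
set X := Q ^+ d.+1 in HM HZ HX *.
set Z := Q ^+ e'.+1 in HZ *.
rewrite HY in HM.
set W := Q ^+ j' in HY HM HQ *.
have W1 : 1 <= W by apply: Qge1.
have key : 2 * W * G1 < Z * G0'.
  have Y1 : 0 < 2 * W - 1 by lra.
  rewrite -(ltr_pM2r Y1).
  have -> : 2 * W * G1 * (2 * W - 1) = 2 * W * (G1 * (2 * W - 1)) by ring.
  rewrite HM.
  have : 2 * W * (X - 1) < Z * (2 * W - 1) by nra.
  move=> h; nra.
nra.
Qed.

Lemma mainlem d : forall e, (d < e)%N -> forall j, (j <= d)%N ->
  (forall i, (i <= d)%N -> 0 < (-1) ^+ (i - (d - j)) * B d e j i) /\
  ((0 < j)%N -> forall i, (i < d)%N -> `|B d e j i.+1| < `|B d e j i|).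
Proof.
elim: d => [|d IHd] e he j hj.
  have -> : j = 0%N by lia.
  split=> // i hi; have -> : i = 0%N by lia.
  by rewrite Bj0 mulr1 expr0.
case: j hj => [|j'] hj.
  split=> // i hi; rewrite Bj0 mulr1.
  by rewrite (_ : (i - (d.+1 - 0) = 0)%N) ?expr0 //; lia.
case: e he => [|e'] he; first lia.
have hj' : (j' <= d)%N by lia.
have [IHs IHm] := IHd e' ltac:(lia) j' hj'.
pose k := (d - j')%N.
pose s := fun i => (-1) ^+ (i - k) : rat.
pose a := fun i => B d.+1 e'.+1 j'.+1 i.
pose b := fun i => B d e' j' i.
pose c := fun i => Q ^+ (e'.+1 + (d - i)).
have Ek : (d.+1 - j'.+1 = k)%N by rewrite subSS.
rewrite Ek.
have Hd : forall i, (i <= d)%N -> a i - a i.+1 = c i * b i.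
  by move=> i hi; apply: Bdiff.
have Hs : forall i, (k <= i)%N -> s i.+1 = - s i.
  move=> i hi; rewrite /s (_ : (i.+1 - k = (i - k).+1)%N) ?exprS ?mulN1r //; lia.
have Hs1 : forall i, (i <= k)%N -> s i = 1.
  move=> i hi; rewrite /s (_ : (i - k = 0)%N) ?expr0 //; lia.
have Hb : forall i, (i <= d)%N -> 0 < s i * b i by move=> i hi; apply: IHs.
have Hbm : forall i, (k <= i)%N -> (i < d)%N -> s i.+1 * b i.+1 < s i * b i.
  move=> i h1 h2.
  have hj0 : (0 < j')%N by rewrite /k in h1; lia.
  have := IHm hj0 i h2.
  by rewrite (@abs_sign _ _ (Hb i.+1 h2)) (@abs_sign _ _ (Hb i (ltnW h2))).
have Hcpos : forall i, 0 < c i by move=> i; apply: Qpos.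
have Hc : forall i, (i < d)%N -> c i = 2 * c i.+1.
  move=> i hi; rewrite /c (_ : (e'.+1 + (d - i) = (e'.+1 + (d - i.+1)).+1)%N) ?exprS //; lia.
have Hbase : 0 < s d.+1 * a d.+1 /\ 2 * (s d.+1 * a d.+1) < c d * (s d * b d).
  have Ea : s d.+1 * a d.+1 = Q ^+ 'C(j'.+1, 2) * gbin d.+1 (d - j').
    rewrite /s /a Bbase // (_ : (d.+1 - k = j'.+1)%N); last lia.
    by rewrite subSS -!mulrA sign_sq.
  have Eb : s d * b d = Q ^+ 'C(j', 2) * gbin d (d - j').
    rewrite /s /b Bbase // (_ : (d - k = j')%N); last lia.
    by rewrite -!mulrA sign_sq.
  split; first by rewrite Ea mulr_gt0 ?Qpos // gbin_pos //; lia.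
  rewrite Ea Eb /c subnn addn0; exact: base_ineq.
have HP : forall i, (k <= i <= d)%N ->
    0 < s i.+1 * a i.+1 /\ 2 * (s i.+1 * a i.+1) < c i * (s i * b i).
  apply: (@down_ind (fun i => 0 < s i.+1 * a i.+1 /\ 2 * (s i.+1 * a i.+1) < c i * (s i * b i)) k d Hbase).
  move=> i h1 h2 [A1 A2].
  have H := Hd i.+1 h2.
  have Ea : a i.+1 = c i.+1 * b i.+1 + a i.+2 by rewrite -H subrK.
  have E : s i.+1 * a i.+1 = c i.+1 * (s i.+1 * b i.+1) - s i.+2 * a i.+2.
    rewrite Ea (Hs i.+1 ltac:(lia)); ring.
  have Hm : c i.+1 * (s i.+1 * b i.+1) < c i.+1 * (s i * b i).
    by rewrite ltr_pM2l // Hbm.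
  rewrite E (Hc i h2).
  split; first lra.
  have -> : 2 * c i.+1 * (s i * b i) = 2 * (c i.+1 * (s i * b i)) by ring.
  lra.
have HQ : forall i, (i <= d)%N -> 0 < s i.+1 * a i.+1 /\ s i.+1 * a i.+1 < s i * a i.
  have HQa : forall i, (k <= i <= d)%N -> 0 < s i.+1 * a i.+1 /\ s i.+1 * a i.+1 < s i * a i.
    move=> i hi; have [A1 A2] := HP i hi.
    have H := Hd i ltac:(lia).
    have Ea : a i = c i * b i + a i.+1 by rewrite -H subrK.
    have E : s i * a i = c i * (s i * b i) - s i.+1 * a i.+1.
      rewrite Ea (Hs i ltac:(lia)); ring.
    rewrite E; split; lra.
  move=> i hi; case: (leqP k i) => hk; first by apply: HQa; lia.
  have : (0 <= i <= k)%N by lia.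
  apply: (@down_ind (fun i => 0 < s i.+1 * a i.+1 /\ s i.+1 * a i.+1 < s i * a i) 0 k).
    apply: HQa; rewrite /k; lia.
  move=> i0 _ h2 [A1 A2].
  have H := Hd i0 ltac:(lia).
  have Ea : a i0 = c i0 * b i0 + a i0.+1 by rewrite -H subrK.
  have Hbi := Hb i0 ltac:(lia).
  rewrite (Hs1 i0 ltac:(lia)) in Hbi *.
  rewrite (Hs1 i0.+1 ltac:(lia)) in A2 *.
  rewrite mul1r in Hbi.
  have Hcb : 0 < c i0 * b i0 by rewrite mulr_gt0.
  rewrite Ea; split; lra.
split.
  move=> i hi; case: (leqP i d) => hid; first by have [A1 A2] := HQ i hid; exact: lt_trans A1 A2.
  have -> : i = d.+1 by lia.
  by have [A1 _] := HQ d (leqnn d).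
move=> _ i hi.
have [A1 A2] := HQ i ltac:(lia).
rewrite (@abs_sign _ _ A1) (@abs_sign _ _ (lt_trans A1 A2)).
exact: A2.
Qed.

Theorem theorem4p6 (d e : nat) :
  (1 <= d)%N -> (d.+1 <= e)%N ->
  forall i j : nat, (i <= d - 1)%N -> (1 <= j <= d)%N ->
  `| B d e j i | > `| B d e j i.+1 |.
Proof.
move=> hd he i j hi /andP [hj1 hj2].
have [_ H] := @mainlem d e he j hj2.
have hid : (i < d)%N by rewrite -(prednK hd) ltnS -subn1.
exact: (H hj1 i hid).
Qed.
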